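(* Let $L,V,W,K,T>0$, $\pi\in(0,1)$, $\bar K=\frac{W}{V+W}K$, $C=V\bar K$. Write $\frac{L}{V}=\theta_1T$ with $\theta_1=j_1+\alpha_1$, $j_1=\lfloor \frac{L}{VT}\rfloor$, $0\le\alpha_1<1$, and $\frac{L}{W}=\theta_2T$ with $\theta_2=j_2+\alpha_2$, $j_2=\lfloor\frac{L}{WT}\rfloor$, $0\le\alpha_2<1$. Define $$k_1=\frac{j_1+\min\{\alpha_1/\pi,1\}}{j_1+\alpha_1}\,\pi\bar K,\qquad k_2=K-\frac{j_2+\min\{\alpha_2/\pi,1\}}{j_2+\alpha_2}\,\pi\frac{C}{W}.$$ Then $$\pi\bar K\le k_1\le\bar K\le k_2\le K-\pi\frac{C}{W}.$$ Moreover, $k_1=\pi\bar K$ if and only if $\alpha_1=0$; $k_1=\bar K$ if and only if $\pi T\ge \frac LV$; $k_2=K-\pi\frac CW$ if and only if $\alpha_2=0$; and $k_2=\bar K$ if and only if $\pi T\ge\frac LW$. *)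

(* Defs.v *)
From mathcomp Require Import all_boot all_order all_algebra.
From mathcomp Require Import reals.
Set Implicit Arguments. Unset Strict Implicit. Unset Printing Implicit Defensive.
Import Order.TTheory GRing.Theory Num.Theory.
Local Open Scope ring_scope.

Section Defs.
Variable R : realType.

Definition jpart (theta : R) : R := (Num.floor theta)%:~R.
Definition apart (theta : R) : R := theta - jpart theta.

Definition Kbar (V W K : R) : R := W / (V + W) * K.
Definition Ccap (V W K : R) : R := V * Kbar V W K.

Definition theta1 (L V T : R) : R := L / (V * T).
Definition theta2 (L W T : R) : R := L / (W * T).

Definition k1 (L V W K T p : R) : R :=
  let th := theta1 L V T in
  (jpart th + Num.min (apart th / p) 1) / (jpart th + apart th) * p * Kbar V W K.

Definition k2 (L V W K T p : R) : R :=
  let th := theta2 L W T in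
  K - (jpart th + Num.min (apart th / p) 1) / (jpart th + apart th) * p
        * (Ccap V W K / W).
End Defs.

(* Main.v *)
Require Import Defs.
From mathcomp Require Import all_boot all_order all_algebra.
From mathcomp Require Import reals.
From mathcomp Require Import ring lra.
Import Order.TTheory GRing.Theory Num.Theory.
Local Open Scope ring_scope.

Lemma core (R : realType) (th p : R) (hth : 0 < th) (hp0 : 0 < p) (hp1 : p < 1) :
  let F := (jpart th + Num.min (apart th / p) 1) / (jpart th + apart th) * p in
  [/\ p <= F, F <= 1, F = p <-> apart th = 0 & F = 1 <-> th <= p].
Proof.
move=> F.
have hs : jpart th + apart th = th by rewrite /apart; ring.
have j0 : 0 <= jpart th by rewrite /jpart ler0z floor_ge0 ltW.
have jle : jpart th <= th by rewrite /jpart floor_le.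
have jlt : th < jpart th + 1 by rewrite /jpart; have := floorD1_gt th; rewrite intrD.
have jint : jpart th = 0 \/ 1 <= jpart th.
  rewrite /jpart; have [h|h] := leP (Num.floor th) 0.
    left; have -> : Num.floor th = 0 by apply/le_anti; rewrite h floor_ge0 ltW.
    by [].
  by right; rewrite ler1z.
rewrite /F {F}; move: hs j0 jle jlt jint.
set j := jpart th; set a := apart th => hs j0 jle jlt jint.
rewrite hs.
have sn : th != 0 by rewrite gt_eqF.
have [h|h] := leP (a / p) 1.
- idtac.
  have ha : a <= p by move: h; rewrite ler_pdivrMr // mul1r.
  have e : (j + a / p) / th * p = (j * p + a) / th by field; rewrite sn gt_eqF.
  rewrite e.
  have ek : forall x, x / th = x * th^-1 by [].
  have ti : th^-1 * th = 1 by rewrite mulVf.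
  have tp : 0 < th^-1 by rewrite invr_gt0.
  split.
  + rewrite ler_pdivlMr //; nra.
  + rewrite ler_pdivrMr //; nra.
  + split => [E|E].
      have := congr1 (fun x => x * th) E; rewrite /= mulfVK // => ?.
      nra.
    apply: (mulIf sn); rewrite mulfVK //; nra.
  + split => [E|E].
      have := congr1 (fun x => x * th) E; rewrite /= mulfVK // mul1r => E2.
      case: jint => jv; nra.
    have jz : j = 0 by case: jint => // jv; nra.
    apply: (mulIf sn); rewrite mulfVK // mul1r; nra.
- idtac.
  have ha : p < a by move: h; rewrite ltr_pdivlMr // mul1r.
  rewrite mulrAC.
  split.
  + rewrite ler_pdivlMr // ?mulr1; nra.
  + rewrite ler_pdivrMr //; nra.
  + split => [E|E]; last nra.
      have := congr1 (fun x => x * th) E; rewrite /= mulfVK // => ?.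
      nra.
  + split => [E|E]; last nra.
      have := congr1 (fun x => x * th) E; rewrite /= mulfVK // mul1r => ?.
      nra.
Qed.

Theorem lemma3p1 (R : realType) (L V W K T p : R)
  (hL : 0 < L) (hV : 0 < V) (hW : 0 < W) (hK : 0 < K) (hT : 0 < T)
  (hp0 : 0 < p) (hp1 : p < 1) :
  [/\ p * Kbar V W K <= k1 L V W K T p,
      k1 L V W K T p <= Kbar V W K,
      Kbar V W K <= k2 L V W K T p,
      k2 L V W K T p <= K - p * (Ccap V W K / W)
    & [/\ k1 L V W K T p = p * Kbar V W K <-> apart (theta1 L V T) = 0,
          k1 L V W K T p = Kbar V W K <-> L / V <= p * T,
          k2 L V W K T p = K - p * (Ccap V W K / W) <-> apart (theta2 L W T) = 0
        & k2 L V W K T p = Kbar V W K <-> L / W <= p * T]].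
Proof.
have t1 : 0 < theta1 L V T by rewrite /theta1 divr_gt0 // mulr_gt0.
have t2 : 0 < theta2 L W T by rewrite /theta2 divr_gt0 // mulr_gt0.
have e1 : theta1 L V T = L / V / T by rewrite /theta1 invfM mulrA.
have e2 : theta2 L W T = L / W / T by rewrite /theta2 invfM mulrA.
have [a1 b1 c1 d1] := @core R _ _ t1 hp0 hp1.
have [a2 b2 c2 d2] := @core R _ _ t2 hp0 hp1.
rewrite /k1 /k2.
move: a1 b1 c1 d1 a2 b2 c2 d2.
set F1 := (_ + Num.min (apart (theta1 L V T) / p) 1) / _ * p.
set F2 := (_ + Num.min (apart (theta2 L W T) / p) 1) / _ * p.
move=> a1 b1 c1 d1 a2 b2 c2 d2.
have VW : V + W != 0 by rewrite gt_eqF // addr_gt0.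
have kb : 0 < Kbar V W K by rewrite /Kbar mulr_gt0 // divr_gt0 // addr_gt0.
have kd : Kbar V W K = K - Ccap V W K / W.
  by rewrite /Ccap /Kbar; field; rewrite VW gt_eqF.
have dp : 0 < Ccap V W K / W by rewrite /Ccap divr_gt0 // mulr_gt0.
have l1 : (L / V <= p * T) = (theta1 L V T <= p).
  by rewrite e1 [RHS]ler_pdivrMr.
have l2 : (L / W <= p * T) = (theta2 L W T <= p).
  by rewrite e2 [RHS]ler_pdivrMr.
have i1 : F1 = 1 <-> (L / V <= p * T) by rewrite l1.
have i2 : F2 = 1 <-> (L / W <= p * T) by rewrite l2.
move: c1 c2 d1 d2 => c1 c2 _ _.
move: dp kb; rewrite kd; set D := Ccap V W K / W => dp kb.
split; [nra|nra|nra|nra|split].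
- apply: (iff_trans _ c1); split => [E|E]; [nra|by rewrite E].
- apply: (iff_trans _ i1); split => [E|E]; [nra|by rewrite E mul1r].
- apply: (iff_trans _ c2); split => [E|E]; [nra|by rewrite E].
- apply: (iff_trans _ i2); split => [E|E]; [nra|by rewrite E mul1r].
Qed.
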